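(* Let $r_A,r_B>0$ satisfy $r_A+r_B\le CK_z\rho|\Lambda|$. Then, for $\rho\bar a^3$ small enough, the functional $$F(r_A,r_B)=\frac{8\pi\bar a}{|\Lambda|}(\rho\bar a^3)^{1/4}(r_A^2+r_B^2)+|\Lambda|^{-3/2}G(r_A,r_B)^{5/4}I(r_A,r_B)-\mu_Ar_A-\mu_Br_B$$ is convex in $(r_A,r_B)$.
   Context: $a_A,a_B,a_{AB}>0$ with $a_{AB}^2\le a_Aa_B$, $\bar a=\max\{a_A,a_B,a_{AB}\}$; $\rho>0$, $|\Lambda|>0$ a volume, $\mu_A,\mu_B\in\mathbb R$, $C>0$ a constant, $K_z=(\rho\bar a^3)^{-\nu}$ with $\nu\in(0,\frac1{10000}]$. $G(r_A,r_B)=r_A^2a_A^2+2r_Ar_Ba_{AB}^2+r_B^2a_B^2$; $I(r_A,r_B)=(8\pi)^{5/2}\frac{2\sqrt2}{15\pi^2}(\mu_+^{5/2}+\mu_-^{5/2})$ with $\mu_\pm=\sqrt{1+\xi_{AB}}\pm\sqrt{1-\xi_{AB}}$ and $\xi_{AB}=\frac{2r_Ar_B(a_Aa_B-a_{AB}^2)}{r_A^2a_A^2+2r_Ar_Ba_{AB}^2+r_B^2a_B^2}$. *)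

(* Defs.v *)
From Stdlib Require Import Reals Lra.
Open Scope R_scope.

(* x^(5/2) for x >= 0, written exactly as x^2 * sqrt x (valid also at x = 0). *)
Definition pow52 (x : R) : R := x ^ 2 * sqrt x.

Definition abar (aA aB aAB : R) : R := Rmax aA (Rmax aB aAB).

Definition Gfun (aA aB aAB rA rB : R) : R :=
  rA ^ 2 * aA ^ 2 + 2 * rA * rB * aAB ^ 2 + rB ^ 2 * aB ^ 2.

Definition xiAB (aA aB aAB rA rB : R) : R :=
  2 * rA * rB * (aA * aB - aAB ^ 2) / Gfun aA aB aAB rA rB.

Definition mu_plus (aA aB aAB rA rB : R) : R :=
  sqrt (1 + xiAB aA aB aAB rA rB) + sqrt (1 - xiAB aA aB aAB rA rB).

Definition mu_minus (aA aB aAB rA rB : R) : R :=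
  sqrt (1 + xiAB aA aB aAB rA rB) - sqrt (1 - xiAB aA aB aAB rA rB).

Definition Ifun (aA aB aAB rA rB : R) : R :=
  pow52 (8 * PI) * (2 * sqrt 2 / (15 * PI ^ 2)) *
  (pow52 (mu_plus aA aB aAB rA rB) + pow52 (mu_minus aA aB aAB rA rB)).

Definition Kz (aA aB aAB rho nu : R) : R :=
  Rpower (rho * abar aA aB aAB ^ 3) (- nu).

Definition Ffun (aA aB aAB rho Lam muA muB rA rB : R) : R :=
  let ab := abar aA aB aAB in
  8 * PI * ab / Lam * Rpower (rho * ab ^ 3) (1 / 4) * (rA ^ 2 + rB ^ 2)
  + Rpower Lam (- (3 / 2)) * Rpower (Gfun aA aB aAB rA rB) (5 / 4)
      * Ifun aA aB aAB rA rB
  - muA * rA - muB * rB.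

Definition domF (aA aB aAB rho Lam C nu rA rB : R) : Prop :=
  0 < rA /\ 0 < rB /\ rA + rB <= C * Kz aA aB aAB rho nu * rho * Lam.

Definition convex_on2 (D : R -> R -> Prop) (f : R -> R -> R) : Prop :=
  forall x1 y1 x2 y2 t, D x1 y1 -> D x2 y2 -> 0 <= t <= 1 ->
    f (t * x1 + (1 - t) * x2) (t * y1 + (1 - t) * y2)
    <= t * f x1 y1 + (1 - t) * f x2 y2.

(* Main.v *)
Require Import Defs.
From Stdlib Require Import Reals Lra Psatz.
Open Scope R_scope.

Lemma pow52_nonneg x : 0 <= pow52 x.
Proof. unfold pow52. apply Rmult_le_pos; [apply pow2_ge_0 | apply sqrt_pos]. Qed.

Lemma pow52_tangent x y : 0 <= x -> 0 <= y ->
  pow52 x + 5/2 * (x * sqrt x) * (y - x) <= pow52 y.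
Proof.
  intros hx hy. unfold pow52.
  pose proof (sqrt_pos x) as ha. pose proof (sqrt_pos y) as hb.
  set (a := sqrt x) in *. set (b := sqrt y) in *.
  assert (Ex : x = a * a) by (unfold a; rewrite sqrt_sqrt; auto).
  assert (Ey : y = b * b) by (unfold b; rewrite sqrt_sqrt; auto).
  rewrite Ex, Ey.
  assert (H : 0 <= (b-a)^2 * (2*b^3+4*a*b^2+6*a^2*b+3*a^3)).
  { apply Rmult_le_pos. apply pow2_ge_0.
    assert (0 <= b^3) by (apply pow_le; auto).
    assert (0 <= a*b^2) by (apply Rmult_le_pos; [auto| apply pow2_ge_0]).
    assert (0 <= a^2*b) by (apply Rmult_le_pos; [apply pow2_ge_0|auto]).
    assert (0 <= a^3) by (apply pow_le; auto). lra. }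
  assert (E : (b*b)^2*b - ((a*a)^2*a + 5/2*(a*a*a)*(b*b - a*a))
             = (1/2) * ((b-a)^2 * (2*b^3+4*a*b^2+6*a^2*b+3*a^3))) by (clearbody a b; field).
  lra.
Qed.

Lemma pow52_jensen x y t : 0 <= x -> 0 <= y -> 0 <= t <= 1 ->
  pow52 (t*x + (1-t)*y) <= t * pow52 x + (1-t) * pow52 y.
Proof.
  intros hx hy ht.
  set (m := t*x + (1-t)*y).
  assert (hm : 0 <= m) by (unfold m; nra).
  set (k := 5/2 * (m * sqrt m)).
  pose proof (pow52_tangent m x hm hx) as T1.
  pose proof (pow52_tangent m y hm hy) as T2. fold k in T1, T2.
  assert (A1 : t * (pow52 m + k * (x - m)) <= t * pow52 x)
    by (apply Rmult_le_compat_l; lra).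
  assert (A2 : (1-t) * (pow52 m + k * (y - m)) <= (1-t) * pow52 y)
    by (apply Rmult_le_compat_l; lra).
  assert (E : t * (pow52 m + k * (x - m)) + (1-t) * (pow52 m + k * (y - m)) = pow52 m)
    by (unfold m; ring).
  lra.
Qed.

Lemma pow52_major em ep d : 0 <= em -> em <= d <= ep ->
  pow52 d + pow52 (ep + em - d) <= pow52 ep + pow52 em.
Proof.
  intros hem hd.
  destruct (Req_dec ep em) as [E|E].
  - assert (d = ep) by lra. rewrite H, E. replace (em+em-em) with em by ring. lra.
  - set (s := (d - em)/(ep - em)).
    assert (hs : 0 <= s <= 1).
    { unfold s; split.
      - apply Rmult_le_pos; [lra| apply Rlt_le, Rinv_0_lt_compat; lra].
      - apply (Rmult_le_reg_r (ep - em)); [lra|]. unfold Rdiv.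
        rewrite Rmult_assoc, Rinv_l by lra. lra. }
    assert (Ed : d = s*ep + (1-s)*em) by (unfold s; field; lra).
    assert (Ed' : ep + em - d = s*em + (1-s)*ep) by (rewrite Ed; ring).
    rewrite Ed' at 1. rewrite Ed at 1.
    pose proof (pow52_jensen ep em s ltac:(lra) hem hs).
    pose proof (pow52_jensen em ep s hem ltac:(lra) hs).
    lra.
Qed.

Definition Dl (aA aB aAB x y : R) : R := x * y * (aA * aB - aAB ^ 2).
Definition Ep aA aB aAB x y :=
  sqrt (Gfun aA aB aAB x y + 2 * Dl aA aB aAB x y) + sqrt (Gfun aA aB aAB x y - 2 * Dl aA aB aAB x y).
Definition Em aA aB aAB x y :=
  sqrt (Gfun aA aB aAB x y + 2 * Dl aA aB aAB x y) - sqrt (Gfun aA aB aAB x y - 2 * Dl aA aB aAB x y).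
Definition Hf aA aB aAB x y := pow52 (Ep aA aB aAB x y) + pow52 (Em aA aB aAB x y).

Definition Qf (al p q c s x y : R) : R :=
  2*(x*al^2 + y*p^2)*c^2 + 2*(2*y*p*q)*c*s + 2*y*q^2*s^2.

Lemma EpEm_form al p q x y : 0 <= x -> 0 <= y ->
  let T := x*al^2 + y*(p^2+q^2) in
  exists R0, 0 <= R0 /\ R0^2 = T^2 - 4*(x*y*al^2*q^2) /\ R0 <= T /\
    Ep (al^2) (p^2+q^2) (al*p) x y = T + R0 /\
    Em (al^2) (p^2+q^2) (al*p) x y = T - R0.
Proof.
  intros hx hy T.
  assert (hT : 0 <= T).
  { unfold T. assert (0 <= al^2) by apply pow2_ge_0.
    assert (0<=p^2) by apply pow2_ge_0. assert (0<=q^2) by apply pow2_ge_0.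
    assert (0 <= x*al^2) by (apply Rmult_le_pos; lra).
    assert (0 <= y*(p^2+q^2)) by (apply Rmult_le_pos; lra). lra. }
  assert (hD : 0 <= x*y*al^2*q^2).
  { apply Rmult_le_pos; [apply Rmult_le_pos; [apply Rmult_le_pos; auto | apply pow2_ge_0] | apply pow2_ge_0]. }
  assert (EG1 : Gfun (al^2) (p^2+q^2) (al*p) x y + 2 * Dl (al^2) (p^2+q^2) (al*p) x y = T^2)
    by (unfold Gfun, Dl, T; ring).
  assert (EG2 : Gfun (al^2) (p^2+q^2) (al*p) x y - 2 * Dl (al^2) (p^2+q^2) (al*p) x y
     = T^2 - 4*(x*y*al^2*q^2)) by (unfold Gfun, Dl, T; ring).
  assert (hnn : 0 <= T^2 - 4*(x*y*al^2*q^2)).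
  { replace (T^2 - 4*(x*y*al^2*q^2)) with ((x*al^2 - y*(p^2+q^2))^2 + 4*(x*y*al^2*p^2))
      by (unfold T; ring).
    assert (0 <= x*y*al^2*p^2) by (apply Rmult_le_pos; [apply Rmult_le_pos; [apply Rmult_le_pos; auto | apply pow2_ge_0] | apply pow2_ge_0]).
    assert (0 <= (x*al^2 - y*(p^2+q^2))^2) by apply pow2_ge_0. lra. }
  exists (sqrt (T^2 - 4*(x*y*al^2*q^2))).
  split; [apply sqrt_pos|]. split; [apply pow2_sqrt; auto|]. split.
  { rewrite <- (sqrt_pow2 T hT) at 2. apply sqrt_le_1_alt. lra. }
  unfold Ep, Em. rewrite EG1, EG2, sqrt_pow2 by auto. split; reflexivity.
Qed.

Lemma Qf_nonneg al p q c s x y : 0 <= x -> 0 <= y -> 0 <= Qf al p q c s x y.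
Proof.
  intros hx hy.
  replace (Qf al p q c s x y) with (2*(x*(al*c)^2 + y*(p*c+q*s)^2)) by (unfold Qf; ring).
  assert (0 <= x*(al*c)^2) by (apply Rmult_le_pos; [auto|apply pow2_ge_0]).
  assert (0 <= y*(p*c+q*s)^2) by (apply Rmult_le_pos; [auto|apply pow2_ge_0]).
  lra.
Qed.

Lemma Qf_lin al p q c s x1 y1 x2 y2 t :
  Qf al p q c s (t*x1+(1-t)*x2) (t*y1+(1-t)*y2)
  = t * Qf al p q c s x1 y1 + (1-t) * Qf al p q c s x2 y2.
Proof. unfold Qf; ring. Qed.

Lemma Qf_range al p q c s x y : 0 <= x -> 0 <= y -> c^2 + s^2 = 1 ->
  Em (al^2) (p^2+q^2) (al*p) x y <= Qf al p q c s x y <= Ep (al^2) (p^2+q^2) (al*p) x y /\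
  Qf al p q c s x y + Qf al p q (-s) c x y
    = Ep (al^2) (p^2+q^2) (al*p) x y + Em (al^2) (p^2+q^2) (al*p) x y.
Proof.
  intros hx hy hcs.
  destruct (EpEm_form al p q x y hx hy) as [R0 [hR0 [HR2 [HRT [HEp HEm]]]]].
  rewrite HEp, HEm.
  set (T := x*al^2 + y*(p^2+q^2)) in *.
  set (d := Qf al p q c s x y). set (d' := Qf al p q (-s) c x y).
  set (o := 2*(x*(al*c)*(-(al*s)) + y*(p*c+q*s)*(-(p*s)+q*c))).
  assert (Hsum : d + d' = 2*T*(c^2+s^2)) by (unfold d, d', T, Qf; ring).
  rewrite hcs in Hsum.
  assert (Hdet : d*d' - o^2 = 4*(x*y*al^2*q^2)*(c^2+s^2)^2) by (unfold d, d', o, Qf; ring).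
  rewrite hcs in Hdet.
  assert (Hprod : (d - (T+R0))*(d - (T-R0)) = - o^2).
  { replace ((d - (T+R0))*(d - (T-R0))) with (d*d - 2*T*d + (T^2 - R0^2)) by ring.
    rewrite HR2. replace (2*T) with (d+d') by lra. lra. }
  assert (0 <= o^2) by apply pow2_ge_0.
  split; [|lra].
  split; nra.
Qed.

Lemma Qf_eig al p q x y : 0 <= x -> 0 <= y ->
  exists c s, c^2 + s^2 = 1 /\ Qf al p q c s x y = Ep (al^2) (p^2+q^2) (al*p) x y.
Proof.
  intros hx hy.
  destruct (EpEm_form al p q x y hx hy) as [R0 [hR0 [HR2 [HRT [HEp HEm]]]]].
  rewrite HEp.
  set (T := x*al^2 + y*(p^2+q^2)) in *.
  set (e := T + R0).
  set (Y11 := 2*(x*al^2 + y*p^2)). set (Y12 := 2*y*p*q). set (Y22 := 2*y*q^2).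
  assert (Hchar : e^2 - (Y11+Y22)*e + (Y11*Y22 - Y12^2) = 0).
  { replace (Y11 + Y22) with (2*T) by (unfold Y11, Y22, T; ring).
    replace (Y11*Y22 - Y12^2) with (4*(x*y*al^2*q^2)) by (unfold Y11, Y22, Y12; ring).
    unfold e. replace ((T+R0)^2) with (T^2 + 2*T*R0 + R0^2) by ring. rewrite HR2. ring. }
  set (v1 := Y12). set (v2 := e - Y11).
  destruct (Req_dec (v1^2 + v2^2) 0) as [Hz|Hnz].
  - assert (v1 = 0) by nra. assert (v2 = 0) by nra.
    exists 1, 0. split; [ring|]. unfold Qf. fold Y11. unfold v2 in *. lra.
  - assert (hpos : 0 < v1^2 + v2^2).
    { assert (0 <= v1^2) by apply pow2_ge_0. assert (0 <= v2^2) by apply pow2_ge_0. lra. }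
    set (n := sqrt (v1^2+v2^2)).
    assert (hn : n^2 = v1^2 + v2^2) by (apply pow2_sqrt; lra).
    assert (hn0 : n <> 0) by (intro H0; rewrite H0 in hn; lra).
    exists (v1/n), (v2/n). split.
    + field_simplify; auto. rewrite hn. field. lra.
    + assert (Hq : Qf al p q (v1/n) (v2/n) x y = (Y11*v1^2 + 2*Y12*v1*v2 + Y22*v2^2)/n^2)
        by (unfold Qf, Y11, Y12, Y22; field; auto).
      rewrite Hq, hn.
      apply (Rmult_eq_reg_r (v1^2+v2^2)); [|lra].
      unfold Rdiv. rewrite Rmult_assoc, Rinv_l by lra. rewrite Rmult_1_r.
      assert (Hid : Y11*v1^2 + 2*Y12*v1*v2 + Y22*v2^2 - e*(v1^2+v2^2)
                    = -(e - Y11) * (e^2 - (Y11+Y22)*e + (Y11*Y22 - Y12^2)))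
        by (unfold v1, v2; ring).
      rewrite Hchar in Hid. fold e. lra.
Qed.

Lemma H_convex_core al p q x1 y1 x2 y2 t :
  0 <= x1 -> 0 <= y1 -> 0 <= x2 -> 0 <= y2 -> 0 <= t <= 1 ->
  Hf (al^2) (p^2+q^2) (al*p) (t*x1+(1-t)*x2) (t*y1+(1-t)*y2)
  <= t * Hf (al^2) (p^2+q^2) (al*p) x1 y1 + (1-t) * Hf (al^2) (p^2+q^2) (al*p) x2 y2.
Proof.
  intros h1 h2 h3 h4 ht.
  assert (hx : 0 <= t*x1+(1-t)*x2) by nra.
  assert (hy : 0 <= t*y1+(1-t)*y2) by nra.
  destruct (Qf_eig al p q _ _ hx hy) as [c [s [hcs hQ]]].
  assert (hcs' : (-s)^2 + c^2 = 1) by lra.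
  destruct (Qf_range al p q c s _ _ hx hy hcs) as [_ hsum].
  unfold Hf at 1. rewrite <- hQ.
  assert (E2 : Em (al^2) (p^2+q^2) (al*p) (t*x1+(1-t)*x2) (t*y1+(1-t)*y2)
             = Qf al p q (-s) c (t*x1+(1-t)*x2) (t*y1+(1-t)*y2)) by lra.
  rewrite E2, !Qf_lin.
  pose proof (pow52_jensen _ _ t (Qf_nonneg al p q c s x1 y1 h1 h2) (Qf_nonneg al p q c s x2 y2 h3 h4) ht) as J1.
  pose proof (pow52_jensen _ _ t (Qf_nonneg al p q (-s) c x1 y1 h1 h2) (Qf_nonneg al p q (-s) c x2 y2 h3 h4) ht) as J2.
  assert (M : forall x y, 0 <= x -> 0 <= y ->
     pow52 (Qf al p q c s x y) + pow52 (Qf al p q (-s) c x y) <= Hf (al^2) (p^2+q^2) (al*p) x y).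
  { intros x y hx' hy'.
    destruct (Qf_range al p q c s x y hx' hy' hcs) as [hr hs].
    assert (hem : 0 <= Em (al^2) (p^2+q^2) (al*p) x y).
    { destruct (Qf_range al p q (-s) c x y hx' hy' hcs') as [[hr' _] _].
      destruct (EpEm_form al p q x y hx' hy') as [R0 [hR0 [HR2 [HRT [HEp HEm]]]]]. lra. }
    replace (Qf al p q (-s) c x y) with
      (Ep (al^2) (p^2+q^2) (al*p) x y + Em (al^2) (p^2+q^2) (al*p) x y - Qf al p q c s x y) by lra.
    unfold Hf. apply pow52_major; auto. }
  pose proof (M x1 y1 h1 h2). pose proof (M x2 y2 h3 h4).
  assert (t * (pow52 (Qf al p q c s x1 y1) + pow52 (Qf al p q (-s) c x1 y1))
          <= t * Hf (al^2) (p^2+q^2) (al*p) x1 y1) by (apply Rmult_le_compat_l; lra).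
  assert ((1-t) * (pow52 (Qf al p q c s x2 y2) + pow52 (Qf al p q (-s) c x2 y2))
          <= (1-t) * Hf (al^2) (p^2+q^2) (al*p) x2 y2) by (apply Rmult_le_compat_l; lra).
  lra.
Qed.

Lemma H_convex aA aB aAB x1 y1 x2 y2 t :
  0 < aA -> aAB^2 <= aA*aB ->
  0 <= x1 -> 0 <= y1 -> 0 <= x2 -> 0 <= y2 -> 0 <= t <= 1 ->
  Hf aA aB aAB (t*x1+(1-t)*x2) (t*y1+(1-t)*y2)
  <= t * Hf aA aB aAB x1 y1 + (1-t) * Hf aA aB aAB x2 y2.
Proof.
  intros hA hAB. 
  set (al := sqrt aA). set (p := aAB / al).
  assert (hal : al^2 = aA) by (apply pow2_sqrt; lra).
  assert (hal0 : 0 < al) by (apply sqrt_lt_R0; lra).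
  assert (hp : al * p = aAB) by (unfold p; field; lra).
  assert (hq0 : 0 <= aB - p^2).
  { unfold p. replace (aB - (aAB/al)^2) with ((aA*aB - aAB^2)/al^2) by (rewrite <- hal; field; lra).
    apply Rmult_le_pos; [lra| apply Rlt_le, Rinv_0_lt_compat; nra]. }
  set (q := sqrt (aB - p^2)).
  assert (hq : p^2 + q^2 = aB) by (unfold q; rewrite pow2_sqrt; lra).
  rewrite <- hal, <- hq, <- hp. apply H_convex_core.
Qed.

Definition K0 := pow52 (8 * PI) * (2 * sqrt 2 / (15 * PI ^ 2)).

Lemma G_pos aA aB aAB x y : 0 < aA -> 0 < aB -> 0 < aAB -> 0 < x -> 0 < y ->
  0 < Gfun aA aB aAB x y.
Proof.
  intros. unfold Gfun.
  assert (0 < x^2*aA^2) by (apply Rmult_lt_0_compat; apply pow_lt; auto).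
  assert (0 < 2*x*y*aAB^2) by (repeat apply Rmult_lt_0_compat; try apply pow_lt; lra).
  assert (0 < y^2*aB^2) by (apply Rmult_lt_0_compat; apply pow_lt; auto).
  lra.
Qed.

Lemma pow52_scale k m : 0 <= k -> 0 <= m ->
  pow52 (k * m) = k^2 * sqrt k * pow52 m.
Proof. intros. unfold pow52. rewrite sqrt_mult_alt by auto. ring. Qed.

Lemma GI_form aA aB aAB x y : 0 < aA -> 0 < aB -> 0 < aAB -> aAB^2 <= aA*aB -> 0 < x -> 0 < y ->
  Rpower (Gfun aA aB aAB x y) (5/4) * Ifun aA aB aAB x y = K0 * Hf aA aB aAB x y.
Proof.
  intros hA hB hAB hAAB hx hy.
  pose proof (G_pos aA aB aAB x y hA hB hAB hx hy) as hG.
  set (G := Gfun aA aB aAB x y) in *.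
  assert (HR : Rpower G (5/4) = sqrt G ^ 2 * sqrt (sqrt G)).
  { replace (5/4) with (1 + /2 * /2) by field.
    rewrite Rpower_plus, Rpower_1 by auto. rewrite <- Rpower_mult.
    rewrite (Rpower_sqrt G) by auto. rewrite Rpower_sqrt by (apply sqrt_lt_R0; auto).
    rewrite pow2_sqrt by lra. reflexivity. }
  assert (hD : 0 <= Dl aA aB aAB x y).
  { unfold Dl. apply Rmult_le_pos; [nra | lra]. }
  set (xi := xiAB aA aB aAB x y).
  assert (hxi : G * xi = 2 * Dl aA aB aAB x y) by (unfold xi, xiAB, Dl; fold G; field; lra).
  assert (hxi0 : 0 <= xi).
  { unfold xi, xiAB. fold G. apply Rmult_le_pos; [|apply Rlt_le, Rinv_0_lt_compat; auto].
    unfold Dl in hD. nra. }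
  assert (Sp : sqrt G * sqrt (1 + xi) = sqrt (G + 2 * Dl aA aB aAB x y)).
  { rewrite <- sqrt_mult_alt by lra. f_equal. rewrite <- hxi. ring. }
  assert (Sm : sqrt G * sqrt (1 - xi) = sqrt (G - 2 * Dl aA aB aAB x y)).
  { rewrite <- sqrt_mult_alt by lra. f_equal. rewrite <- hxi. ring. }
  assert (hsG : 0 <= sqrt G) by apply sqrt_pos.
  assert (hmp : 0 <= mu_plus aA aB aAB x y).
  { unfold mu_plus. fold xi. pose proof (sqrt_pos (1+xi)). pose proof (sqrt_pos (1-xi)). lra. }
  assert (hmm : 0 <= mu_minus aA aB aAB x y).
  { unfold mu_minus. fold xi. assert (sqrt (1-xi) <= sqrt (1+xi)) by (apply sqrt_le_1_alt; lra). lra. }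
  assert (Ep_eq : Ep aA aB aAB x y = sqrt G * mu_plus aA aB aAB x y).
  { unfold Ep, mu_plus. fold G xi. rewrite Rmult_plus_distr_l, Sp, Sm. reflexivity. }
  assert (Em_eq : Em aA aB aAB x y = sqrt G * mu_minus aA aB aAB x y).
  { unfold Em, mu_minus. fold G xi. rewrite Rmult_minus_distr_l, Sp, Sm. reflexivity. }
  unfold Hf, Ifun. rewrite Ep_eq, Em_eq. rewrite (pow52_scale (sqrt G) (mu_plus _ _ _ _ _)) by auto. rewrite (pow52_scale (sqrt G) (mu_minus _ _ _ _ _)) by auto. rewrite HR. unfold K0. ring.
Qed.

Theorem lemmaF1 :
  forall (aA aB aAB C nu : R),
    0 < aA -> 0 < aB -> 0 < aAB -> aAB ^ 2 <= aA * aB ->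
    0 < C -> 0 < nu <= 1 / 10000 ->
    exists eps : R, 0 < eps /\
      forall (rho Lam muA muB : R),
        0 < rho -> 0 < Lam ->
        rho * abar aA aB aAB ^ 3 < eps ->
        convex_on2 (domF aA aB aAB rho Lam C nu)
                   (Ffun aA aB aAB rho Lam muA muB).
Proof.
  intros aA aB aAB C nu hA hB hAB hAAB hC hnu.
  exists 1. split; [lra|].
  intros rho Lam muA muB hrho hLam _.
  intros x1 y1 x2 y2 t [hx1 [hy1 _]] [hx2 [hy2 _]] ht.
  set (ab := abar aA aB aAB).
  assert (hab : 0 < ab).
  { unfold ab, abar. pose proof (Rmax_l aA (Rmax aB aAB)). lra. }
  set (c1 := 8 * PI * ab / Lam * Rpower (rho * ab ^ 3) (1 / 4)).
  assert (hc1 : 0 <= c1).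
  { unfold c1. pose proof PI_RGT_0.
    apply Rmult_le_pos.
    - apply Rlt_le. unfold Rdiv.
      apply Rmult_lt_0_compat; [|apply Rinv_0_lt_compat; auto]. apply Rmult_lt_0_compat; lra.
    - unfold Rpower. apply Rlt_le, exp_pos. }
  set (c2 := Rpower Lam (-(3/2)) * K0).
  assert (hc2 : 0 <= c2).
  { unfold c2, K0. apply Rmult_le_pos. unfold Rpower; apply Rlt_le, exp_pos.
    apply Rmult_le_pos. apply pow52_nonneg. pose proof PI_RGT_0.
    pose proof (sqrt_pos 2). unfold Rdiv. apply Rmult_le_pos; [lra|].
    apply Rlt_le, Rinv_0_lt_compat. assert (0 < PI^2) by (apply pow_lt; lra). lra. }
  assert (FE : forall x y, 0 < x -> 0 < y ->
     Ffun aA aB aAB rho Lam muA muB x y = c1*(x^2+y^2) + c2 * Hf aA aB aAB x y - muA*x - muB*y).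
  { intros x y hx hy. unfold Ffun, c1, c2. fold ab.
    rewrite Rmult_assoc with (r1 := Rpower Lam (-(3/2))).
    rewrite GI_form by auto. ring. }
  assert (hX : 0 < t*x1+(1-t)*x2) by nra.
  assert (hY : 0 < t*y1+(1-t)*y2) by nra.
  rewrite !FE by auto.
  pose proof (H_convex aA aB aAB x1 y1 x2 y2 t hA hAAB ltac:(lra) ltac:(lra) ltac:(lra) ltac:(lra) ht) as HH.
  assert (HQ : (t*x1+(1-t)*x2)^2 + (t*y1+(1-t)*y2)^2 <= t*(x1^2+y1^2) + (1-t)*(x2^2+y2^2)).
  { assert (E : t*(x1^2+y1^2) + (1-t)*(x2^2+y2^2) - ((t*x1+(1-t)*x2)^2 + (t*y1+(1-t)*y2)^2)
                = t*(1-t)*((x1-x2)^2+(y1-y2)^2)) by ring.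
    assert (0 <= t*(1-t)) by nra.
    assert (0 <= (x1-x2)^2+(y1-y2)^2) by (pose proof (pow2_ge_0 (x1-x2)); pose proof (pow2_ge_0 (y1-y2)); lra).
    assert (0 <= t*(1-t)*((x1-x2)^2+(y1-y2)^2)) by (apply Rmult_le_pos; lra). lra. }
  apply (Rmult_le_compat_l c1) in HQ; auto.
  apply (Rmult_le_compat_l c2) in HH; auto.
  set (H0 := Hf aA aB aAB (t*x1+(1-t)*x2) (t*y1+(1-t)*y2)) in *.
  set (H1 := Hf aA aB aAB x1 y1) in *. set (H2 := Hf aA aB aAB x2 y2) in *.
  assert (E : t * (c1 * (x1 ^ 2 + y1 ^ 2) + c2 * H1 - muA * x1 - muB * y1) +
              (1 - t) * (c1 * (x2 ^ 2 + y2 ^ 2) + c2 * H2 - muA * x2 - muB * y2)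
            - (c1 * ((t*x1+(1-t)*x2) ^ 2 + (t*y1+(1-t)*y2) ^ 2) + c2 * H0
               - muA * (t*x1+(1-t)*x2) - muB * (t*y1+(1-t)*y2))
            = (c1 * (t*(x1^2+y1^2) + (1-t)*(x2^2+y2^2)) - c1 * ((t*x1+(1-t)*x2)^2 + (t*y1+(1-t)*y2)^2))
              + (c2 * (t*H1 + (1-t)*H2) - c2 * H0)) by ring.
  lra.
Qed.
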